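(* Let $d\ge5$ with $d\equiv1\pmod 4$, and let $g:\{-1,1\}^d\to\mathbb{R}$, $g(x)=|x_1+\dots+x_d|$, with Fourier coefficients $\hat g(S)$, $S\subseteq[d]$. Then for all $u\in[d]$, \[\sum_{S\subseteq[d],\,u\in S}|\hat g(S)|\ge\frac{2^{(d-1)/2}}{2\sqrt{d-1}}.\]
   Context: The Fourier coefficients of $g:\{-1,1\}^d\to\mathbb{R}$ are the unique reals $\hat g(S)$ with $g(x)=\sum_{S\subseteq[d]}\hat g(S)\prod_{i\in S}x_i$ for all $x$. *)

(* Defs.v *)
From mathcomp Require Import all_boot all_order all_algebra.
From mathcomp Require Import reals.
Set Implicit Arguments. Unset Strict Implicit. Unset Printing Implicit Defensive.
Import Order.TTheory GRing.Theory Num.Theory.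
Local Open Scope ring_scope.

Definition is_cube_point (R : realType) (d : nat) (x : 'I_d -> R) : Prop :=
  forall i, x i = 1 \/ x i = -1.

Definition fourier_coeffs (R : realType) (d : nat)
    (g : ('I_d -> R) -> R) (c : {set 'I_d} -> R) : Prop :=
  forall x : 'I_d -> R, is_cube_point x ->
    g x = \sum_(S : {set 'I_d}) c S * \prod_(i in S) x i.

Definition abs_sum (R : realType) (d : nat) (x : 'I_d -> R) : R :=
  `| \sum_(i < d) x i |.

(* Main.v *)
Require Import Defs.
From mathcomp Require Import all_boot all_order all_algebra.
From mathcomp Require Import reals complex.
From mathcomp Require Import zify ring lra.
Import Order.TTheory GRing.Theory Num.Theory.
Local Open Scope ring_scope.
Set Implicit Arguments. Unset Strict Implicit.
Lemma binc_rec m : (m.+1 * 'C((m.+1).*2, m.+1) = 2 * (m.*2).+1 * 'C(m.*2, m))%N.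
Proof.
have h1 := mul_bin_diag (m.*2.+2) m.
have h2 := mul_bin_diag (m.*2.+1) m.
have e : 'C(m.*2.+1, m.+1) = 'C(m.*2.+1, m).
  rewrite -[in RHS]bin_sub; last by lia.
  congr 'C(_,_); lia.
rewrite e /= in h2. rewrite /= in h1.
rewrite doubleS -h1.
rewrite -mulnA h2.
lia.
Qed.

Lemma binc_le m : ('C((m.+1).*2, m.+1) <= 4 * 'C(m.*2, m))%N.
Proof. have := binc_rec m; nia. Qed.

Lemma binc_lb m : (16 ^ m <= 'C(m.*2, m) ^ 2 * (4 * m + 1))%N.
Proof.
elim: m => [|m IH]; first by rewrite bin0.
have h := binc_rec m.
set X := 'C(_, m.+1) in h *. set C := 'C(_, m) in h IH *.
rewrite -(leq_pmul2l (_ : 0 < (m.+1)^2)%N); last by rewrite expn_gt0.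
have -> : ((m.+1)^2 * (X ^ 2 * (4 * m.+1 + 1)) = (m.+1 * X)^2 * (4 * m+5))%N by ring.
rewrite h.
have k : ((m.+1)^2 * 16 * (4 * m+1) <= (2 * (m.*2).+1)^2 * (4 * m+5))%N.
  rewrite -muln2; nia.
have -> : ((2 * (m.*2).+1 * C) ^ 2 * (4 * m + 5) = ((2 * (m.*2).+1)^2 * (4 * m+5)) * C^2)%N by ring.
apply: leq_trans (leq_mul k (leqnn _)).
rewrite -!mulnA leq_pmul2l ?expn_gt0 // expnS.
move: IH; set Y := (16 ^ m)%N; nia.
Qed.

Definition Qs (T : comNzRingType) (a b : T) (n m : nat) : T :=
  \sum_(k < m) (a ^+ (n - k) * b ^+ k) *+ 'C(n, k).

Lemma Qs_peel (T : comNzRingType) (a b : T) n m :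
  Qs a b n m.+1 = Qs a b n m + (a ^+ (n - m) * b ^+ m) *+ 'C(n, m).
Proof. by rewrite /Qs big_ord_recr. Qed.

Lemma Qs0 (T : comNzRingType) (a b : T) n : Qs a b n 0 = 0.
Proof. by rewrite /Qs big_ord0. Qed.

Lemma Qrec (T : comNzRingType) (a b : T) n m :
  Qs a b n.+1 m.+1 = (a + b) * Qs a b n m + (a ^+ (n - m).+1 * b ^+ m) *+ 'C(n, m).
Proof.
elim: m => [|m IH].
  by rewrite /Qs big_ord1 big_ord0 /= !subn0 bin0 expr0 mulr1 mulr0 add0r bin0.
rewrite Qs_peel IH Qs_peel binS subSS.
have [lt|ge] := ltnP m n.
  have -> : (n - m.+1).+1 = (n - m)%N by lia.
  rewrite !mulrnDr !exprS; ring.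
rewrite (bin_small (n := n) (m := m.+1)) ?ltnS // mulr0n.
have -> : (n - m)%N = 0%N by lia.

rewrite !mulrnDr !exprS; ring.
Qed.
Section Cx.
Variable R : realType.
Local Notation C := R[i].
Local Notation cIm := (@complex.Im R).
Definition ii : C := Complex 0 1.
Definition aa : C := Complex 1 1.
Definition bb : C := Complex 1 (-1).
Definition cr (x : R) : C := Complex x 0.

Lemma cr_add x y : cr (x + y) = cr x + cr y.
Proof. by rewrite /cr; apply/eqP; rewrite eq_complex /= addr0 !eqxx. Qed.
Lemma cr_mul x y : cr (x * y) = cr x * cr y.
Proof. by rewrite /cr; apply/eqP; rewrite eq_complex /= !mulr0 !mul0r subr0 addr0 !eqxx. Qed.
Lemma cr_nat n : cr n%:R = n%:R.
Proof. elim: n => [|n IH]; first by []. by rewrite -!natr1 cr_add IH. Qed.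
Lemma cr_exp x k : cr (x ^+ k) = cr x ^+ k.
Proof. elim: k => [|k IH]; first by []. by rewrite !exprS cr_mul IH. Qed.

Ltac cxeq := apply/eqP; rewrite eq_complex /=; apply/andP; split; apply/eqP.

Lemma aabb : aa + bb = 2. Proof. cxeq; lra. Qed.
Lemma aabbM : aa * bb = cr 2. Proof. cxeq; lra. Qed.
Lemma ab_bal k : aa ^+ k * bb ^+ k = cr (2 ^+ k).
Proof. by rewrite -exprMn aabbM cr_exp. Qed.
Lemma ab_unb k : aa ^+ k.+1 * bb ^+ k = aa * cr (2 ^+ k).
Proof. by rewrite exprS -mulrA ab_bal. Qed.

Lemma ImD (x y : C) : cIm (x + y) = cIm x + cIm y. Proof. by case: x => a b; case: y => c e. Qed.
Lemma ImN (x : C) : cIm (- x) = - cIm x. Proof. by case: x => a b. Qed.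
Lemma ImB (x y : C) : cIm (x - y) = cIm x - cIm y. Proof. by rewrite ImD ImN. Qed.
Lemma ImMn (x : C) k : cIm (x *+ k) = cIm x *+ k.
Proof. elim: k => [|k IH]; first by []. by rewrite !mulrS ImD IH. Qed.
Lemma Im_cr x : cIm (cr x) = 0. Proof. by []. Qed.
Lemma Im_aacr x : cIm (aa * cr x) = x.
Proof. rewrite /=; lra. Qed.
Lemma Im_crM x (z : C) : cIm (cr x * z) = x * cIm z.
Proof. case: z => p q /=. lra. Qed.
Lemma two_cr : (2 : C) = cr 2. Proof. by rewrite cr_nat. Qed.

Lemma Qstep m : cIm (Qs aa bb (m.*2).+4 m.+2) =
  16 * cIm (Qs aa bb m.*2 m) + 2 ^+ m * (8 * ('C(m.*2, m))%:R + 4 * ('C(m.*2.+2, m.+1))%:R).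
Proof.
have e6 := Qs_peel aa bb (m.*2).+4 m.+2.
have e5 := Qrec aa bb (m.*2).+3 m.+2.
have e4 := Qrec aa bb (m.*2).+2 m.+1.
have e3 := Qs_peel aa bb (m.*2).+2 m.+1.
have e2 := Qrec aa bb (m.*2).+1 m.+1.
have e1 := Qrec aa bb (m.*2) m.
have -> : Qs aa bb m.*2.+4 m.+2 = Qs aa bb m.*2.+4 m.+3 - (aa ^+ (m.*2.+4 - m.+2) * bb ^+ m.+2) *+ 'C(m.*2.+4, m.+2).
  by rewrite e6 addrK.
rewrite e5 e4.
have -> : Qs aa bb m.*2.+2 m.+1 = Qs aa bb m.*2.+2 m.+2 - (aa ^+ (m.*2.+2 - m.+1) * bb ^+ m.+1) *+ 'C(m.*2.+2, m.+1).
  by rewrite e3 addrK.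
rewrite e2 e1 aabb.
have A1 : (m.*2.+4 - m.+2 = m.+2)%N by lia.
have A2 : (m.*2.+3 - m.+2 = m.+1)%N by lia.
have A3 : (m.*2.+2 - m.+1 = m.+1)%N by lia.
have A4 : (m.*2.+1 - m.+1 = m)%N by lia.
have A5 : (m.*2 - m = m)%N by lia.
rewrite A1 A2 A3 A4 A5.
rewrite !ab_bal !ab_unb two_cr.
rewrite !(ImD, ImB, ImN, ImMn, Im_crM, Im_cr, Im_aacr) !mul0rn.
move: (complex.Im _) => P.
rewrite !subr0 !addr0 exprS -[2 ^+ m *+ _]mulr_natr -[(2 * 2 ^+ m) *+ _]mulr_natr.
move: (2 ^+ m) => t. move: ('C(m.*2, m)%:R) => x. move: ('C(m.*2.+2, m.+1)%:R) => y.
ring.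
Qed.

Lemma ImSum (I : finType) (P : pred I) (F : I -> C) :
  cIm (\sum_(i | P i) F i) = \sum_(i | P i) cIm (F i).
Proof. exact: (big_morph _ ImD). Qed.
Lemma Im_Mcr (z : C) x : cIm (z * cr x) = cIm z * x.
Proof. case: z => p q /=; lra. Qed.
Lemma cr_prod (I : finType) (P : pred I) (F : I -> R) :
  cr (\prod_(i | P i) F i) = \prod_(i | P i) cr (F i).
Proof. exact: (big_morph _ cr_mul). Qed.

Section Cube.
Variables (d : nat) (u : 'I_d).
Definition pt (X : {set 'I_d}) : 'I_d -> R := fun i => if i \in X then -1 else 1.
Definition om (X : {set 'I_d}) : C :=
  cr (pt X u) * \prod_(i | i != u) (1 + ii * cr (pt X i)).
Definition chi (S X : {set 'I_d}) : R := \prod_(i in S) pt X i.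
Definition Ff (S : {set 'I_d}) (i : 'I_d) : C :=
  if i == u then (if i \in S then Complex 2 0 else Complex 0 0)
  else (if i \in S then Complex 0 2 else Complex 2 0).

Lemma orth S : \sum_X om X * cr (chi S X) = \prod_i Ff S i.
Proof.
pose A (x : R) i : C := (if i == u then cr x else 1 + ii * cr x) * (if i \in S then cr x else 1).
transitivity (\prod_i (A (-1) i + A 1 i)); last first.
  apply: eq_bigr => i _; rewrite /A /Ff.
  by case: (i == u); case: (i \in S); cxeq; lra.
rewrite bigA_distr; apply: eq_bigr => X _.
transitivity (\prod_i A (pt X i) i); last first.
  by apply: eq_bigr => i _; rewrite /pt; case: (i \in X).
rewrite /A big_split /= (bigD1 u) //= eqxx /om /chi cr_prod.
congr (_ * _ * _); last by rewrite big_mkcond.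
by rewrite [RHS]big_mkcond [LHS]big_mkcond; apply: eq_bigr => i _; case: eqP.
Qed.

Lemma Im_le_normc (z : C) : `|cIm z| <= ComplexField.Normc.normc z.
Proof.
case: z => a b; rewrite /ComplexField.Normc.normc /= -sqrtr_sqr; apply: ler_wsqrtr.
by rewrite lerDr sqr_ge0.
Qed.

Lemma orth_bound S : `|cIm (\prod_i Ff S i)| <= (if u \in S then 2 ^+ d else 0).
Proof.
case: ifP => uS; last first.
  rewrite (bigD1 u) //= /Ff eqxx uS mul0r /=; by rewrite normr0.
apply: le_trans (Im_le_normc _) _.
rewrite (big_morph _ (@ComplexField.Normc.normcM R) (@ComplexField.Normc.normc1 R)).
have -> : (2 : R) ^+ d = \prod_(i < d) 2 by rewrite prodr_const card_ord.
apply: ler_prod => i _; apply/andP; split; first by case: (Ff S i) => ? ?; exact: sqrtr_ge0.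
have h2 : Num.sqrt ((2 : R) ^+ 2) = 2 by rewrite sqrtr_sqr ger0_norm.
rewrite /Ff; case: (i == u); case: (i \in S); rewrite /ComplexField.Normc.normc ?expr0n /= ?addr0 ?add0r ?h2 //.
by rewrite sqrtr0.
Qed.


Lemma pt_cube X : is_cube_point (pt X).
Proof. by move=> i; rewrite /pt; case: (i \in X); [right|left]. Qed.

Lemma dual (ghat : {set 'I_d} -> R) (hF : fourier_coeffs (@abs_sum R d) ghat) :
  \sum_X cIm (om X) * abs_sum (pt X) <= 2 ^+ d * \sum_(S : {set 'I_d} | u \in S) `|ghat S|.
Proof.
have e X : abs_sum (pt X) = \sum_S ghat S * chi S X by rewrite hF //; exact: pt_cube.
under eq_bigr do rewrite e mulr_sumr.
rewrite exchange_big /=.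
have e2 S : \sum_X cIm (om X) * (ghat S * chi S X) = ghat S * cIm (\prod_i Ff S i).
  rewrite -orth ImSum mulr_sumr; apply: eq_bigr => X _.
  by rewrite Im_Mcr mulrCA.
under eq_bigr do rewrite e2.
rewrite mulr_sumr [X in _ <= X]big_mkcond /=.
apply: ler_sum => S _.
apply: le_trans (ler_norm _) _; rewrite normrM.
have := orth_bound S; case: (u \in S) => hb.
  by rewrite mulrC ler_wpM2r.
have h0 : `|cIm (\prod_i Ff S i)| = 0 by apply/le_anti; rewrite hb normr_ge0.
by rewrite h0 mulr0.
Qed.

Lemma prod_constP (I : finType) (P : pred I) (x : C) :
  \prod_(i | P i) x = x ^+ #|P|.
Proof. by rewrite -prodr_const. Qed.
Lemma sum_constP (I : finType) (P : pred I) (x : R) :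
  \sum_(i | P i) x = x *+ #|P|.
Proof. by rewrite -sumr_const. Qed.

Lemma aaE : 1 + ii * cr 1 = aa. Proof. cxeq; lra. Qed.
Lemma bbE : 1 + ii * cr (-1) = bb. Proof. cxeq; lra. Qed.

Lemma om_eq X : om X = cr (pt X u) * (aa ^+ (d.-1 - #|X :\ u|) * bb ^+ #|X :\ u|).
Proof.
rewrite /om; congr (_ * _).
rewrite (bigID (fun i => i \in X)) /=.
under eq_bigr => i /andP[_ hi] do rewrite /pt hi bbE.
under [X in _ * X = _]eq_bigr => i /andP[_ hi] do rewrite /pt (negbTE hi) aaE.
rewrite !prod_constP mulrC; congr (_ ^+ _ * _ ^+ _).
  have := cardID (mem X) (predC1 u); rewrite cardC1 card_ord.
  have -> : #|[predI predC1 u & mem X]| = #|X :\ u|.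
    by apply: eq_card => i; rewrite !inE.
  move=> <-; rewrite addKn; apply: eq_card => i; rewrite !inE.
  by rewrite -topredE /= andbC.
by apply: eq_card => i; rewrite !inE -topredE /=.
Qed.

Lemma sum_pt X : \sum_i pt X i = d%:R - 2 * #|X|%:R.
Proof.
rewrite (bigID (fun i => i \in X)) /=.
under eq_bigr => i hi do rewrite /pt hi.
under [X in _ + X = _]eq_bigr => i hi do rewrite /pt (negbTE hi).
rewrite !sum_constP.
have := cardC (mem X); rewrite card_ord => hc.
have hr : (d%:R : R) = #|mem X|%:R + #|predC (mem X)|%:R by rewrite -natrD hc.
rewrite mulNrn.
have -> : #|(fun i => i \notin X)| = #|predC (mem X)| by apply: eq_card.
have -> : #|(fun i => i \in X)| = #|mem X| by apply: eq_card.
rewrite hr; lra.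
Qed.


Lemma setD1_notin (X : {set 'I_d}) : u \notin X -> X :\ u = X.
Proof.
move=> h; apply/setP => i; rewrite in_setD1; case: eqP => // ->.
by rewrite (negbTE h).
Qed.

Lemma sub_notin (X : {set 'I_d}) : (X \subset [set~ u]) = (u \notin X).
Proof.
apply/subsetP/idP => [h|h i hi].
  by apply/negP => /h; rewrite in_setC1 eqxx.
by rewrite in_setC1; apply/eqP => ei; move: h; rewrite -ei hi.
Qed.

Lemma CLa (G : nat -> R) :
  \sum_(X : {set 'I_d} | u \notin X) G #|X| = \sum_(k < d.+1) ('C(d.-1, k))%:R * G k.
Proof.
rewrite (partition_big (fun X : {set 'I_d} => (inord #|X| : 'I_d.+1)) predT) //=.
apply: eq_bigr => k _.
have e (X : {set 'I_d}) : u \notin X -> (inord #|X| == k :> 'I_d.+1) = (#|X| == k).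
  move=> hX; rewrite -val_eqE /= inordK // ltnS; apply: leq_trans (max_card _) _; by rewrite card_ord.
transitivity (\sum_(X : {set 'I_d} | (X \subset [set~ u]) && (#|X| == k)) G k).
  apply: eq_big => X; first by rewrite sub_notin; case hX: (u \notin X) => //=; rewrite e ?hX.
  by move=> /andP[hX]; rewrite e // => /eqP ->.
rewrite sum_constP mulr_natl; congr (_ *+ _).
have -> : d.-1 = #|[set~ u]| by rewrite cardsC1 card_ord.
rewrite -cards_draws; apply: eq_card => X.
by rewrite !inE.
Qed.

Lemma CL (F : bool -> nat -> R) :
  \sum_(X : {set 'I_d}) F (u \in X) #|X :\ u| =
  \sum_(k < d.+1) ('C(d.-1, k))%:R * (F false k + F true k).
Proof.
rewrite (bigID (fun X : {set 'I_d} => u \in X)) /= addrC.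
under [X in X + _ = _]eq_bigr => X hX do rewrite (negbTE hX) setD1_notin //.
rewrite [X in _ + X](reindex_onto (fun Y => u |: Y) (fun X => X :\ u)) /=; last first.
  by move=> X hX; exact: setD1K.
rewrite [X in _ + X](eq_big (fun Y : {set 'I_d} => u \notin Y) (fun Y => F true #|Y|)); first last.
- by move=> Y /andP[_ /eqP hY]; rewrite setU11 hY.
- move=> Y; rewrite setU11 /=; case hY: (u \in Y) => /=.
    by apply/negbTE; apply/eqP => e; move: hY; rewrite -e !inE eqxx.
  by rewrite setU1K ?hY // eqxx.
rewrite !CLa -big_split /=; apply: eq_bigr => k _; by rewrite mulrDr.
Qed.


Lemma Vform : \sum_X cIm (om X) * abs_sum (pt X) =
  \sum_(k < d.+1) ('C(d.-1, k))%:R * (cIm (aa ^+ (d.-1 - k) * bb ^+ k) *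
     (`|d%:R - 2 * k%:R| - `|d%:R - 2 * k.+1%:R|)).
Proof.
pose F (b : bool) (j : nat) := cIm (cr (if b then -1 else 1) * (aa ^+ (d.-1 - j) * bb ^+ j))
   * `|d%:R - 2 * (b + j)%N%:R|.
transitivity (\sum_(X : {set 'I_d}) F (u \in X) #|X :\ u|).
  apply: eq_bigr => X _; rewrite /F om_eq /abs_sum sum_pt (cardsD1 u X) /pt.
  by case: (u \in X).
rewrite CL; apply: eq_bigr => k _; congr (_ * _).
rewrite /F !Im_crM add0n add1n.
move: (cIm _) => I; move: `|_ - 2 * k%:R| => x; move: `|_ - _| => y.
ring.
Qed.

End Cube.

Lemma ImQs n m : cIm (Qs aa bb n m) = \sum_(0 <= k < m) ('C(n, k))%:R * cIm (aa ^+ (n - k) * bb ^+ k).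
Proof.
rewrite /Qs ImSum big_mkord; apply: eq_bigr => k _.
by rewrite ImMn mulr_natl.
Qed.

Lemma ksum m : \sum_(k < m.*2.+2) ('C(m.*2, k))%:R * (cIm (aa ^+ (m.*2 - k) * bb ^+ k) *
     (`|(m.*2.+1)%:R - 2 * k%:R| - `|(m.*2.+1)%:R - 2 * k.+1%:R|)) =
  4 * cIm (Qs aa bb m.*2 m).
Proof.
pose f k := ('C(m.*2, k))%:R * cIm (aa ^+ (m.*2 - k) * bb ^+ k).
have E : ((m.*2.+1)%:R : R) = 2 * m%:R + 1 by rewrite -natr1 -muln2 natrM mulrC.
have nS k : (k.+1%:R : R) = k%:R + 1 by rewrite -natr1.
have psi1 k : (k < m)%N -> `|(m.*2.+1)%:R - 2 * k%:R| - `|(m.*2.+1)%:R - 2 * k.+1%:R| = 2 :> R.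
  move=> hk; have : (k%:R + 1 <= m%:R :> R) by rewrite -nS ler_nat.
  move=> h; rewrite E nS !ger0_norm; lra.
have psi2 : `|(m.*2.+1)%:R - 2 * m%:R| - `|(m.*2.+1)%:R - 2 * m.+1%:R| = 0 :> R.
  rewrite E nS ger0_norm; last lra.
  rewrite ler0_norm; last lra.
  lra.
have psi3 k : (m < k)%N -> `|(m.*2.+1)%:R - 2 * k%:R| - `|(m.*2.+1)%:R - 2 * k.+1%:R| = -2 :> R.
  move=> hk; have : (m%:R + 1 <= k%:R :> R) by rewrite -nS ler_nat.
  move=> h; rewrite E nS !ler0_norm; lra.
have fm : f m = 0.
  by rewrite /f (_ : (m.*2 - m = m)%N) ?ab_bal ?Im_cr ?mulr0 //; lia.
have binom : \sum_(0 <= k < m.*2.+1) f k = 0.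
  have h := congr1 (@complex.Im R) (exprDn aa bb m.*2).
  rewrite aabb two_cr -cr_exp Im_cr ImSum in h.
  rewrite big_mkord [RHS]h.
  by apply: eq_bigr => k _; rewrite ImMn /f mulr_natl.
rewrite big_ord_recr /= bin_small ?ltnSn // mul0r addr0.
rewrite -(big_mkord xpredT (fun k => ('C(m.*2, k))%:R * (cIm (aa ^+ (m.*2 - k) * bb ^+ k) *
     (`|(m.*2.+1)%:R - 2 * k%:R| - `|(m.*2.+1)%:R - 2 * k.+1%:R|)))).
rewrite (big_cat_nat _ (n := m)) //=; last by lia.
rewrite (big_ltn (m := m)) /=; last by lia.
move: binom; rewrite (big_cat_nat _ (n := m)) //=; last by lia.
rewrite (big_ltn (m := m)) /=; last by lia.
rewrite fm add0r => binom.
rewrite psi2 mulr0 mulr0 add0r ImQs.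
rewrite (eq_big_nat _ _ (F2 := fun k => f k * 2)); last first.
  by move=> k /andP[_ hk]; rewrite psi1 // mulrA.
rewrite [X in _ + X = _](eq_big_nat _ _ (F2 := fun k => f k * -2)); last first.
  by move=> k /andP[hk _]; rewrite psi3 // mulrA.
rewrite -!mulr_suml.
move: binom; rewrite /f; move: (\sum_(0 <= i < m) _) => s1; move: (\sum_(m.+1 <= i < _) _) => s3.
lra.
Qed.


Lemma ksum' m d : d = m.*2.+1 -> \sum_(k < d.+1) ('C(d.-1, k))%:R * (cIm (aa ^+ (d.-1 - k) * bb ^+ k) *
     (`|d%:R - 2 * k%:R| - `|d%:R - 2 * k.+1%:R|)) = 4 * cIm (Qs aa bb m.*2 m).
Proof. by move=> ->; exact: ksum. Qed.

Lemma Pbound q : 2 ^+ (q.*2.+2) * ('C((q.*2.+2).*2.+2, q.*2.+3))%:R / 8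
   <= cIm (Qs aa bb (q.*2.+2).*2 (q.*2.+2)).
Proof.
elim: q => [|q IH].
  have := Qstep 0; rewrite Qs0 /= => h.
  rewrite (_ : (0.*2.+2).*2 = (0.*2).+4)%N // h.
  rewrite (_ : 'C(6, 3) = 20)%N // (_ : 'C(0.*2, 0) = 1)%N // (_ : 'C(0.*2.+2, 1) = 2)%N //.
  rewrite (_ : 0.*2.+2 = 2)%N // expr2 expr0 mul1r; lra.
set m := q.*2.+2.
have em : (q.+1).*2.+2 = m.+2 by rewrite doubleS.
rewrite em (_ : (m.+2).*2 = m.*2.+4)%N; last by rewrite !doubleS.
rewrite Qstep.
have b1 := binc_le m. have b2 := binc_le m.+1. have b3 := binc_le m.+2.
have hX : ('C((m.+2).*2.+2, m.+3) <= 12 * 'C(m.*2.+2, m.+1) + 16 * 'C(m.*2, m))%N.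
  rewrite !doubleS in b1 b2 b3 *; lia.
have hXr : ('C((m.+2).*2.+2, m.+3))%:R <= 12 * ('C(m.*2.+2, m.+1))%:R + 16 * ('C(m.*2, m))%:R :> R.
  by rewrite -[12]/(12%:R) -[16]/(16%:R) -!natrM -natrD ler_nat.
move: IH hXr; rewrite -/m exprS exprS.
have tp : 0 < (2 : R) ^+ m by rewrite exprn_gt0.
move: (2 ^+ m) tp => t tp.
move: (('C(_, m.+3))%:R) => X; move: (('C(m.*2.+2, m.+1))%:R) => C2; move: (('C(m.*2, m))%:R) => N.
move: (complex.Im _) => P h1 h2.
have h3 : 0 <= t * (12 * C2 + 16 * N - X) by apply: mulr_ge0; lra.
nra.
Qed.

End Cx.

Lemma fin_nat m : (2 <= m)%N -> (4 * 16 ^ m <= 'C(m.*2.+2, m.+1) ^ 2 * m.*2)%N.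
Proof.
move=> hm; have := binc_lb m.+1; rewrite doubleS expnS.
move: ('C(_, _)) => c; set Y := (16 ^ m)%N.
rewrite -muln2 => h; nia.
Qed.

Lemma cast_hn (R : realType) m c : (4 * 16 ^ m <= c ^ 2 * m.*2)%N ->
  4 * (2 ^+ m) ^+ 4 <= (c%:R) ^+ 2 * (m.*2)%:R :> R.
Proof.
have e16 : (16 : R) = 2 ^+ 4 by rewrite !exprS expr0; lra.
rewrite -(ler_nat R) !natrM !natrX e16 -exprM mulnC exprM.
by [].
Qed.

Unset Implicit Arguments. Set Strict Implicit.

Theorem lemma25 (R : realType) (d : nat) (hd : (5 <= d)%N) (hmod : (d %% 4 = 1)%N)
  (ghat : {set 'I_d} -> R) (hF : fourier_coeffs (@abs_sum R d) ghat) (u : 'I_d) :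
  2 ^+ ((d - 1) %/ 2) / (2 * Num.sqrt ((d - 1)%:R)) <=
    \sum_(S : {set 'I_d} | u \in S) `|ghat S|.
Proof.
have [q hq] : exists q, d = (q.*2.+2).*2.+1.
  exists (d %/ 4).-1; have := divn_eq d 4; rewrite hmod; lia.
set m := q.*2.+2 in hq.
have hd1 : (d - 1 = m.*2)%N by lia.
have hd2 : ((d - 1) %/ 2 = m)%N by rewrite hd1 -muln2 mulnK.
rewrite hd2 hd1.
have V1 := dual u hF.
rewrite Vform (@ksum' R m d hq) in V1.
have PB := Pbound R q; rewrite -/m in PB.
have hn : (4 * 16 ^ m <= 'C(m.*2.+2, m.+1) ^ 2 * m.*2)%N by apply: fin_nat; rewrite /m; lia.
have e2d : (2 : R) ^+ d = 2 * (2 ^+ m) ^+ 2 by rewrite hq exprS -muln2 exprM.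
rewrite e2d in V1.
have hnr := cast_hn R hn.
have sp : 0 < Num.sqrt ((m.*2)%:R : R) by rewrite sqrtr_gt0 ltr0n /m; lia.
have s2 : Num.sqrt ((m.*2)%:R : R) ^+ 2 = (m.*2)%:R by rewrite sqr_sqrtr // ler0n.
have tp : 0 < (2 : R) ^+ m by rewrite exprn_gt0.
have cp : 0 <= (('C(m.*2.+2, m.+1))%:R : R) by rewrite ler0n.
rewrite ler_pdivrMr; last by rewrite mulr_gt0.
rewrite -s2 in hnr.
move: V1 PB hnr sp tp cp.
move: (Num.sqrt _) => s; move: (2 ^+ m) => t; move: (('C(_, _))%:R) => c.
move: (\sum_(S | _) _) => Sg; move: (complex.Im _) => P.
move=> V1 PB hnr sp tp cp.
have k1 : c <= 4 * t * Sg by nra.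
have k2 : 2 * t ^+ 2 <= c * s.
  rewrite -(ler_pXn2r (_ : 0 < 2)%N) ?nnegrE //.
  - have -> : (2 * t ^+ 2) ^+ 2 = 4 * t ^+ 4 by rewrite exprMn -exprM; ring.
    by rewrite exprMn.
  - by rewrite mulr_ge0 // exprn_ge0 // ltW.
  - by rewrite mulr_ge0 // ltW.
have k3 : c * s <= 4 * t * Sg * s by rewrite ler_wpM2r //; lra.
nra.
Qed.
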